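(* Let $m\ge1$, $0<\lambda_1\le\dots\le\lambda_m$, $0<\Lambda_0\le\Lambda_1$, and let $a,b$ be positive definite $m\times m$ matrices with $\Lambda_0I\le a\le\Lambda_1I$ and $\Lambda_0I\le b\le\Lambda_1I$. For $w\in\mathbb{R}^m$ set $\theta=\Lambda_0^{-1}m\|a-b\|_s$ and $\phi=\Lambda_0^{-2}\|w\|^2\|a-b\|_s$. For any $M>0$ there is a constant $c_1=c_1(M)$ such that if $\theta,\phi<M$ then for all $t>0$, $$\Big|\frac{Q_m(w,\widetilde A(t))}{Q_m(w,\widetilde B(t))}-1\Big|\le c_1(\phi+\theta).$$
   Context: $E(s)$ is the diagonal matrix with entries $e^{-\lambda_is}$; $a(t)=\int_0^tE(s)\,a\,E(s)\,ds$ (so $a_{ij}(t)=a_{ij}(1-e^{-(\lambda_i+\lambda_j)t})/(\lambda_i+\lambda_j)$); $g(t)$ is diagonal with $g_{ii}(t)=(1-e^{-2\lambda_it})/(2\lambda_i)$ and $G(t)=g(t)^{-1}$; $\widetilde a(t)=G(t)^{1/2}a(t)G(t)^{1/2}$ and $\widetilde A(t)=\widetilde a(t)^{-1}$; $b(t),\widetilde b(t),\widetilde B(t)$ are defined analogously from $b$. $\|c\|_s=\max\{\sup_i\sum_j|c_{ij}|,\sup_j\sum_i|c_{ij}|\}$. $Q_m(w,C)=(2\pi)^{-m/2}(\det C)^{1/2}e^{-\langle w,Cw\rangle/2}$ for positive definite $C$. *)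

(* Defs.v *)
From HB Require Import structures.
From mathcomp Require Import all_boot all_order all_algebra.
From mathcomp Require Import all_classical all_reals all_analysis.
Set Implicit Arguments. Unset Strict Implicit. Unset Printing Implicit Defensive.
Import Order.TTheory GRing.Theory Num.Theory.
Local Open Scope ring_scope.

Section Defs.
Variable R : realType.

Definition qform (m : nat) (c : 'M[R]_m) (x : 'rV[R]_m) : R :=
  (x *m c *m x^T) 0 0.

Definition sqnorm (m : nat) (x : 'rV[R]_m) : R := \sum_i x 0 i ^+ 2.

Definition posdef (m : nat) (c : 'M[R]_m) : Prop :=
  c^T = c /\ forall x : 'rV[R]_m, x != 0 -> 0 < qform c x.

Definition loewner_bounds (m : nat) (L0 L1 : R) (c : 'M[R]_m) : Prop :=
  forall x : 'rV[R]_m, L0 * sqnorm x <= qform c x <= L1 * sqnorm x.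

Definition snorm (m : nat) (c : 'M[R]_m) : R :=
  Num.max (\big[Num.max/0]_i \sum_j `|c i j|)
          (\big[Num.max/0]_j \sum_i `|c i j|).

Definition mat_t (m : nat) (lam : 'I_m -> R) (a : 'M[R]_m) (t : R) : 'M[R]_m :=
  \matrix_(i, j) (a i j * (1 - expR (- (lam i + lam j) * t)) / (lam i + lam j)).

Definition g_t (m : nat) (lam : 'I_m -> R) (t : R) (i : 'I_m) : R :=
  (1 - expR (- (2 * lam i) * t)) / (2 * lam i).

Definition Ghalf (m : nat) (lam : 'I_m -> R) (t : R) : 'M[R]_m :=
  diag_mx (\row_i Num.sqrt ((g_t lam t i)^-1)).

Definition tilde_mat (m : nat) (lam : 'I_m -> R) (a : 'M[R]_m) (t : R) : 'M[R]_m :=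
  Ghalf lam t *m mat_t lam a t *m Ghalf lam t.

Definition Tilde_inv (m : nat) (lam : 'I_m -> R) (a : 'M[R]_m) (t : R) : 'M[R]_m :=
  invmx (tilde_mat lam a t).

Definition Qm (m : nat) (w : 'rV[R]_m) (C : 'M[R]_m) : R :=
  (2 * pi) `^ (- (m%:R / 2)) * Num.sqrt (\det C) * expR (- (qform C w / 2)).

End Defs.

(* Main.v *)
Require Import Defs.
From HB Require Import structures.
From mathcomp Require Import all_boot all_order all_algebra.
From mathcomp Require Import all_classical all_reals all_analysis.
From mathcomp Require Import ring lra.
Import Order.TTheory GRing.Theory Num.Theory.
Import numFieldNormedType.Exports.
Local Open Scope ring_scope.

Set Implicit Arguments. Unset Strict Implicit.

Section S.
Variable R : realType.

Lemma term_derive (k mu t : R) : mu != 0 ->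
  is_derive t 1 (fun s : R => k * ((1 - expR (- mu * s)) / mu)) (k * expR (- mu * t)).
Proof.
move=> mu0.
apply: trigger_derive.
rewrite /GRing.scale/= !mulr1 mulr0 add0r add0r.
by field.
Qed.

Definition Hsum n (k mu : 'I_n -> 'I_n -> R) (s : R) : R :=
  \sum_i \sum_j k i j * ((1 - expR (- mu i j * s)) / mu i j).

Arguments Hsum {n}.
Lemma Hsum_derive n (k mu : 'I_n -> 'I_n -> R) (t : R) : (forall i j, 0 < mu i j) ->
  is_derive t 1 (Hsum k mu) (\sum_i \sum_j k i j * expR (- mu i j * t)).
Proof.
move=> mu0.
have -> : Hsum k mu = \sum_i \sum_j (fun s => k i j * ((1 - expR (- mu i j * s)) / mu i j)).
  apply/funext => s; rewrite /Hsum fct_sumE; apply: eq_bigr => i _.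
  by rewrite fct_sumE.
apply: is_derive_sum => i; apply: is_derive_sum => j.
by apply: term_derive; rewrite gt_eqF.
Qed.

Lemma Hsum_ge0 n (k mu : 'I_n -> 'I_n -> R) : (forall i j, 0 < mu i j) ->
  (forall s, 0 <= s -> 0 <= \sum_i \sum_j k i j * expR (- mu i j * s)) ->
  forall t, 0 <= t -> 0 <= Hsum k mu t.
Proof.
move=> mu0 hk t t0.
have -> : 0 = Hsum k mu 0.
  rewrite /Hsum big1 // => i _; rewrite big1 // => j _.
  by rewrite mulr0 expR0 subrr mul0r mulr0.
apply: (@ger0_derive1_ndecry _ (Hsum k mu) 0) => //.
- by move=> x _; apply: ex_derive; apply: Hsum_derive.
- move=> x; rewrite in_itv/= andbT => x0.
  have hd := @Hsum_derive n k mu x mu0; rewrite derive1E derive_val.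
  exact/hk/ltW.
- have hc : continuous (Hsum k mu : R -> R).
    move=> x; apply/differentiable_continuous/derivable1_diffP; apply: ex_derive; exact: Hsum_derive.
  exact: (@continuous_subspaceT _ _ _ _ hc).
Qed.
End S.

Section S.
Variable R : realType.

Lemma qformB n (A B : 'M[R]_n) k x : qform (A - k *: B) x = qform A x - k * qform B x.
Proof. by rewrite /qform mulmxBr mulmxBl -scalemxAr -scalemxAl !mxE. Qed.

Lemma det_schur n (P : 'M[R]_(1 + n)) :
  let p := ulsubmx P 0 0 in p != 0 ->
  \det P = p * \det (drsubmx P - p^-1 *: (dlsubmx P *m ursubmx P)).
Proof.
move=> p p0.
pose E : 'M[R]_(1+n) := block_mx 1%:M 0 (- p^-1 *: dlsubmx P) 1%:M.
have dE : \det E = 1 by rewrite det_lblock !det1 mulr1.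
have EP : E *m P = block_mx (ulsubmx P) (ursubmx P) 0
     (drsubmx P - p^-1 *: (dlsubmx P *m ursubmx P)).
  rewrite -[P in E *m P](submxK P) /E mulmx_block !mul1mx !mul0mx !addr0.

  congr block_mx.
    rewrite [ulsubmx P]mx11_scalar -/p mul_mx_scalar scalerA mulrN mulfV //.
    by rewrite scaleN1r addNr.
  by rewrite -scalemxAl scaleNr addrC.
have := congr1 determinant EP.
by rewrite det_mulmx dE mul1r det_ublock det_mx11.
Qed.


Lemma mx11_mulE (X Y : 'M[R]_1) : (X *m Y) 0 0 = X 0 0 * Y 0 0.
Proof. by rewrite !mxE big_ord1. Qed.

Lemma sym_dl n (A : 'M[R]_(1 + n)) : A^T = A -> dlsubmx A = (ursubmx A)^T.
Proof. by move=> sA; rewrite trmx_ursub sA. Qed.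

Lemma qform_block n (A : 'M[R]_(1 + n)) (y0 : R) (z : 'rV[R]_n) : A^T = A ->
  qform A (row_mx y0%:M z) = y0 ^+ 2 * ulsubmx A 0 0
     + 2 * y0 * (ursubmx A *m z^T) 0 0 + qform (drsubmx A) z.
Proof.
move=> sA.
rewrite /qform -[X in _ *m X *m _](submxK A) tr_row_mx mul_row_block mul_row_col.
rewrite !mulmxDl tr_scalar_mx !mul_mx_scalar !mul_scalar_mx (sym_dl sA).
have e : z *m (ursubmx A)^T = (ursubmx A *m z^T)^T by rewrite trmx_mul trmxK.
rewrite e -scalemxAl !mxE.
ring.
Qed.


Definition schur n (A : 'M[R]_(1 + n)) : 'M[R]_n :=
  drsubmx A - (ulsubmx A 0 0)^-1 *: (dlsubmx A *m ursubmx A).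

Lemma qform_schur n (A : 'M[R]_(1 + n)) (z : 'rV[R]_n) : A^T = A ->
  qform (schur A) z = qform (drsubmx A) z
     - (ulsubmx A 0 0)^-1 * ((ursubmx A *m z^T) 0 0) ^+ 2.
Proof.
move=> sA; rewrite /schur qformB; congr (_ - _ * _).
rewrite /qform (sym_dl sA) mulmxA -mulmxA mx11_mulE.
have e : z *m (ursubmx A)^T = (ursubmx A *m z^T)^T by rewrite trmx_mul trmxK.
by rewrite e mxE expr2.
Qed.

Lemma qform_square n (A : 'M[R]_(1 + n)) (y0 : R) (z : 'rV[R]_n) : A^T = A ->
  ulsubmx A 0 0 != 0 ->
  qform A (row_mx y0%:M z) = ulsubmx A 0 0 *
     (y0 + (ursubmx A *m z^T) 0 0 / ulsubmx A 0 0) ^+ 2 + qform (schur A) z.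
Proof.
move=> sA a0; rewrite qform_block // qform_schur //.
by field.
Qed.

Lemma schur_sym n (A : 'M[R]_(1 + n)) : A^T = A -> (schur A)^T = schur A.
Proof.
move=> sA; rewrite /schur linearB /= linearZ /= trmx_mul trmx_drsub sA.
by rewrite (sym_dl sA) trmxK.
Qed.

Lemma row_mx_neq0 n (y : 'rV[R]_1) (z : 'rV[R]_n) : z != 0 -> row_mx y z != 0.
Proof. by move=> z0; rewrite row_mx_eq0 negb_and z0 orbT. Qed.

Lemma qform0 n (A : 'M[R]_n) : qform A 0 = 0.
Proof. by rewrite /qform mul0mx mul0mx mxE. Qed.

Lemma det_mono n (P Q : 'M[R]_n) : P^T = P -> Q^T = Q ->
  (forall x, x != 0 -> 0 < qform P x) -> (forall x, qform P x <= qform Q x) ->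
  0 < \det P /\ \det P <= \det Q.
Proof.
elim: n P Q => [|n IH] P Q sP sQ pP PQ.
  by rewrite !det_mx00; split.
move: P Q sP sQ pP PQ; rewrite -[n.+1]/(1 + n)%N => P Q sP sQ pP PQ.
have pos1 : forall A : 'M[R]_(1 + n), A^T = A ->
    qform A (row_mx 1%:M 0) = ulsubmx A 0 0.
  move=> A sA; rewrite qform_block // trmx0 mulmx0 qform0 !mxE.
  by rewrite expr1n mul1r mulr0 !addr0.
have h10 : (1%:M : 'M[R]_1) != 0.
  by apply/eqP => /matrixP /(_ 0 0); rewrite !mxE /= => /eqP; rewrite oner_eq0.
have p0 : 0 < ulsubmx P 0 0.
  by rewrite -pos1 //; apply: pP; rewrite row_mx_eq0 negb_and h10.
have q0 : 0 < ulsubmx Q 0 0.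
  by rewrite -pos1 //; apply: (lt_le_trans (pP _ _) (PQ _)); rewrite row_mx_eq0 negb_and h10.
have pq : ulsubmx P 0 0 <= ulsubmx Q 0 0 by rewrite -!pos1 //.
have minS : forall A : 'M[R]_(1 + n), A^T = A -> 0 < ulsubmx A 0 0 ->
    forall y0 z, qform (schur A) z <= qform A (row_mx y0%:M z).
  move=> A sA a0 y0 z; rewrite qform_square ?gt_eqF // lerDr.
  by apply: mulr_ge0; [exact: ltW | exact: sqr_ge0].
have eqS : forall A : 'M[R]_(1 + n), A^T = A -> 0 < ulsubmx A 0 0 ->
    forall z, qform (schur A) z = 
       qform A (row_mx (- ((ursubmx A *m z^T) 0 0 / ulsubmx A 0 0))%:M z).
  move=> A sA a0 z; rewrite qform_square ?gt_eqF //.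
  by rewrite addNr expr2 !mulr0 add0r.
have [dS1 dS2] : 0 < \det (schur P) /\ \det (schur P) <= \det (schur Q).
  apply: IH; try exact: schur_sym.
    move=> z z0; rewrite eqS //; apply: pP; exact: row_mx_neq0.
  move=> z; rewrite (eqS Q) //.
  exact: (le_trans (minS _ sP p0 _ _) (PQ _)).
rewrite (@det_schur n P) ?gt_eqF // (@det_schur n Q) ?gt_eqF //.
split; first exact: mulr_gt0.
apply: ler_pM => //; [exact: ltW | exact: ltW].
Qed.

End S.

Section S.
Variable R : realType.

Lemma qformE n (c : 'M[R]_n) x : qform c x = \sum_i \sum_j x 0 i * c i j * x 0 j.
Proof.
rewrite /qform mxE (eq_bigr (fun j => \sum_i x 0 i * c i j * x 0 j)).
  exact: exchange_big.
by move=> j _; rewrite !mxE mulr_suml.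
Qed.

Lemma sqnorm_ge0 n (x : 'rV[R]_n) : 0 <= sqnorm x.
Proof. by apply: sumr_ge0 => i _; exact: sqr_ge0. Qed.

Lemma row_le_snorm n (D : 'M[R]_n) i : \sum_j `|D i j| <= snorm D.
Proof. by rewrite /snorm le_max; apply/orP; left; apply: le_bigmax. Qed.

Lemma col_le_snorm n (D : 'M[R]_n) j : \sum_i `|D i j| <= snorm D.
Proof. by rewrite /snorm le_max; apply/orP; right; apply: le_bigmax. Qed.

Lemma qform_abs_le n (E D : 'M[R]_n) x : (forall i j, `|E i j| <= `|D i j|) ->
  `|qform E x| <= snorm D * sqnorm x.
Proof.
move=> ED; rewrite qformE.
apply: (le_trans (ler_norm_sum _ _ _)).
apply: (@le_trans _ _ (\sum_i \sum_j `|D i j| * ((x 0 i ^+ 2 + x 0 j ^+ 2) / 2))).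
  apply: ler_sum => i _; apply: (le_trans (ler_norm_sum _ _ _)).
  apply: ler_sum => j _; rewrite !normrM.
  have h : `|x 0 i| * `|x 0 j| <= (x 0 i ^+ 2 + x 0 j ^+ 2) / 2.
    rewrite -(real_normK (num_real (x 0 i))) -(real_normK (num_real (x 0 j))).
    have := sqr_ge0 (`|x 0 i| - `|x 0 j|); lra.
  rewrite mulrAC [in X in _ <= X]mulrC; apply: ler_pM => //.
have -> : \sum_i \sum_j `|D i j| * ((x 0 i ^+ 2 + x 0 j ^+ 2) / 2) =
   (\sum_i \sum_j `|D i j| * x 0 i ^+ 2 + \sum_i \sum_j `|D i j| * x 0 j ^+ 2) / 2.
  rewrite -big_split mulr_suml /=; apply: eq_bigr => i _.
  rewrite -big_split mulr_suml /=; apply: eq_bigr => j _; by field.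
have -> : \sum_i \sum_j `|D i j| * x 0 i ^+ 2 = \sum_i x 0 i ^+ 2 * \sum_j `|D i j|.
  by apply: eq_bigr => i _; rewrite mulr_sumr; apply: eq_bigr => j _; rewrite mulrC.
have -> : \sum_i \sum_j `|D i j| * x 0 j ^+ 2 = \sum_j x 0 j ^+ 2 * \sum_i `|D i j|.
  rewrite exchange_big /=.
  by apply: eq_bigr => j _; rewrite mulr_sumr; apply: eq_bigr => i _; rewrite mulrC.
rewrite /sqnorm.
have h1 : \sum_i x 0 i ^+ 2 * \sum_j `|D i j| <= snorm D * \sum_i x 0 i ^+ 2.
  rewrite mulr_sumr; apply: ler_sum => i _; rewrite mulrC.
  by apply: ler_wpM2r; [exact: sqr_ge0 | exact: row_le_snorm].
have h2 : \sum_j x 0 j ^+ 2 * \sum_i `|D i j| <= snorm D * \sum_i x 0 i ^+ 2.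
  rewrite mulr_sumr; apply: ler_sum => j _; rewrite mulrC.
  by apply: ler_wpM2r; [exact: sqr_ge0 | exact: col_le_snorm].
lra.
Qed.


Lemma sqnorm_gt0 n (x : 'rV[R]_n) : x != 0 -> 0 < sqnorm x.
Proof.
move=> x0; rewrite lt_def sqnorm_ge0 andbT; apply: contra x0 => /eqP s0.
apply/eqP/matrixP => i j; rewrite (ord1 i) mxE.
have h := psumr_eq0P (fun j _ => sqr_ge0 (x 0 j)) s0.
have := h j isT.
by move/eqP; rewrite sqrf_eq0 => /eqP.
Qed.

Lemma pd_unit n (P : 'M[R]_n) : P^T = P -> (forall x, x != 0 -> 0 < qform P x) ->
  P \in unitmx /\ 0 < \det P.
Proof.
move=> sP pP; have [d0 _] := det_mono sP sP pP (fun x => lexx _).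
by rewrite unitmxE unitfE gt_eqF.
Qed.

Definition bil n (D : 'M[R]_n) (u v : 'rV[R]_n) : R := (u *m D *m v^T) 0 0.

Lemma bil_sym n (D : 'M[R]_n) u v : D^T = D -> bil D v u = bil D u v.
Proof.
move=> sD; have e : (v *m D *m u^T)^T = u *m D *m v^T.
  by rewrite !trmx_mul trmxK sD mulmxA.
by rewrite /bil -e [RHS]mxE.
Qed.

Lemma polar n (D : 'M[R]_n) u v : D^T = D ->
  bil D u v = (qform D (u + v) - qform D (u - v)) / 4.
Proof.
move=> sD.
have h : v *m D *m u^T = u *m D *m v^T.
  by apply/matrixP => i j; rewrite (ord1 i) (ord1 j); exact: bil_sym.
rewrite /qform !linearD /= !linearN /= !mulmxDl !mulNmx h /bil.
rewrite !mxE.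
by field.
Qed.


Lemma sqnorm_par n (u v : 'rV[R]_n) :
  sqnorm (u + v) + sqnorm (u - v) = 2 * sqnorm u + 2 * sqnorm v.
Proof.
rewrite /sqnorm -big_split !mulr_sumr -big_split /=; apply: eq_bigr => i _.
rewrite !mxE; ring.
Qed.

Lemma qformN n (D : 'M[R]_n) x : qform (- D) x = - qform D x.
Proof. by rewrite /qform mulmxN mulNmx mxE. Qed.

Lemma inv_bound n (P : 'M[R]_n) (L0 : R) w : 0 < L0 -> P^T = P ->
  P \in unitmx -> (forall x, L0 * sqnorm x <= qform P x) ->
  sqnorm (w *m invmx P) <= sqnorm w / L0 ^+ 2.
Proof.
move=> L0p sP uP lb; set u := w *m invmx P.
have e : qform P u = \sum_i w 0 i * u 0 i.
  rewrite /qform /u mulmxKV // mxE; apply: eq_bigr => i _; by rewrite mxE.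
have h : \sum_i w 0 i * u 0 i <= (L0 * sqnorm u + sqnorm w / L0) / 2.
  rewrite /sqnorm mulr_sumr mulr_suml -big_split mulr_suml /=.
  apply: ler_sum => i _.
  have := sqr_ge0 (L0 * u 0 i - w 0 i).
  have : 0 < L0^-1 by rewrite invr_gt0.
  move=> iL h0.
  have := mulr_ge0 (ltW iL) h0.
  have eL : L0 * L0^-1 = 1 by rewrite mulfV // gt_eqF.
  move=> h1.
  suff : 0 <= (L0 * u 0 i ^+ 2 + w 0 i ^+ 2 / L0) / 2 - w 0 i * u 0 i by lra.
  have -> : (L0 * u 0 i ^+ 2 + w 0 i ^+ 2 / L0) / 2 - w 0 i * u 0 i =
     L0^-1 * (L0 * u 0 i - w 0 i) ^+ 2 / 2.
    by field; rewrite gt_eqF.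
  by apply: divr_ge0.
have := lb u; rewrite e => h2.
have h3 : L0 * sqnorm u <= sqnorm w / L0 by lra.
rewrite ler_pdivlMr ?exprn_gt0 //.
have : sqnorm u * L0 ^+ 2 = (L0 * sqnorm u) * L0 by rewrite expr2; ring.
move=> ->; rewrite -ler_pdivlMr //.
Qed.


Lemma inv_qform_diff n (P Q : 'M[R]_n) (L0 s : R) w : 0 < L0 -> 0 <= s ->
  P^T = P -> Q^T = Q -> P \in unitmx -> Q \in unitmx ->
  (forall x, L0 * sqnorm x <= qform P x) -> (forall x, L0 * sqnorm x <= qform Q x) ->
  (forall x, `|qform (P - Q) x| <= s * sqnorm x) ->
  `|qform (invmx P) w - qform (invmx Q) w| <= s * sqnorm w / L0 ^+ 2.
Proof.
move=> L0p s0 sP sQ uP uQ lbP lbQ hD.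
set u := w *m invmx P; set v := w *m invmx Q.
have eP : qform (invmx P) w = bil Q u v.
  have wv : w^T = Q *m v^T by rewrite -[Q in RHS]sQ -trmx_mul /v mulmxKV.
  by rewrite /qform wv mulmxA.
have eQ : qform (invmx Q) w = bil P u v.
  have wu : w^T = P *m u^T by rewrite -[P in RHS]sP -trmx_mul /u mulmxKV.
  by rewrite /qform wu mulmxA (bil_sym _ _ sP).
have sD : (P - Q)^T = P - Q by rewrite linearB /= sP sQ.
have -> : qform (invmx P) w - qform (invmx Q) w = - bil (P - Q) u v.
  by rewrite eP eQ /bil mulmxBr mulmxBl !mxE; ring.
rewrite normrN polar //.
have h1 := hD (u + v); have h2 := hD (u - v).
have hu := inv_bound w L0p sP uP lbP.
have hv := inv_bound w L0p sQ uQ lbQ.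
have hp := sqnorm_par u v.
rewrite normrM (ger0_norm (x := 4^-1)) //.
have := ler_normB (qform (P - Q) (u + v)) (qform (P - Q) (u - v)).
move=> hB.
have hs1 : s * sqnorm u <= s * (sqnorm w / L0 ^+ 2) by apply: ler_wpM2l.
have hs2 : s * sqnorm v <= s * (sqnorm w / L0 ^+ 2) by apply: ler_wpM2l.
rewrite -/u -/v in hu hv.
have hp' : s * sqnorm (u + v) + s * sqnorm (u - v) = 2 * (s * sqnorm u) + 2 * (s * sqnorm v).
  by rewrite -mulrDr hp; ring.
rewrite -mulrA.
lra.
Qed.


Lemma qformD2 n (A B : 'M[R]_n) x : qform (A - B) x = qform A x - qform B x.
Proof. by rewrite /qform mulmxBr mulmxBl !mxE. Qed.

Lemma qformZ n (A : 'M[R]_n) k x : qform (k *: A) x = k * qform A x.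
Proof. by rewrite /qform -scalemxAr -scalemxAl mxE. Qed.

Lemma det_ratio n (P Q : 'M[R]_n) (L0 s : R) : 0 < L0 -> 0 <= s ->
  P^T = P -> Q^T = Q ->
  (forall x, L0 * sqnorm x <= qform P x) -> (forall x, L0 * sqnorm x <= qform Q x) ->
  (forall x, `|qform (P - Q) x| <= s * sqnorm x) ->
  0 < \det Q /\ \det Q <= expR (n%:R * (s / L0)) * \det P.
Proof.
move=> L0p s0 sP sQ lbP lbQ hD.
set c := 1 + s / L0.
have c0 : 0 <= c by rewrite /c addr_ge0 // divr_ge0 // ltW.
have sc : (c *: P)^T = c *: P by rewrite linearZ /= sP.
have pdQ : forall x, x != 0 -> 0 < qform Q x.
  move=> x x0; apply: lt_le_trans (lbQ x); apply: mulr_gt0 => //; exact: sqnorm_gt0.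
have QcP : forall x, qform Q x <= qform (c *: P) x.
  move=> x; rewrite qformZ /c mulrDl mul1r.
  have h1 := hD x; rewrite qformD2 in h1.
  have h2 := lbP x.
  have h3 : s * sqnorm x <= s / L0 * qform P x.
    rewrite -mulrA; apply: ler_wpM2l => //.
    by rewrite ler_pdivlMl // ?mulrC.
  have := ler_normr (qform P x - qform Q x) ; move: h1.
  move=> h1 _; have := ler_norm (qform Q x - qform P x).
  rewrite distrC => h4.
  lra.
have [d0 dle] := det_mono sQ sc pdQ QcP.
split => //.
apply: le_trans dle _; rewrite detZ.
apply: ler_wpM2r.
  have [dP _] := det_mono sP sP (fun x x0 => lt_le_trans (mulr_gt0 L0p (sqnorm_gt0 x0)) (lbP x)) (fun x => lexx _).
  exact: ltW.
rewrite expRM_natl; apply: lerXn2r => //.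
  by rewrite nnegrE expR_ge0.
by rewrite /c expR_ge1Dx.
Qed.

End S.

Section S.
Variable R : realType.

Definition FF n (lam : 'I_n -> R) (t : R) i j : R :=
  (1 - expR (- (lam i + lam j) * t)) / (lam i + lam j).

Lemma psd_weighted n (c : 'M[R]_n) (lam : 'I_n -> R) (y : 'I_n -> R) t :
  (forall i, 0 < lam i) -> (forall z, 0 <= qform c z) -> 0 <= t ->
  0 <= \sum_i \sum_j c i j * y i * y j * FF lam t i j.
Proof.
move=> lp cp t0.
have H := @Hsum_ge0 R n (fun i j => c i j * y i * y j) (fun i j => lam i + lam j)
  (fun i j => addr_gt0 (lp i) (lp j)).
suff hyp : forall s, 0 <= s ->
    0 <= \sum_i \sum_j c i j * y i * y j * expR (- (lam i + lam j) * s).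
  by have := H hyp t t0; rewrite /Hsum /FF.
move=> s s0; have := cp (\row_i (y i * expR (- lam i * s))); rewrite qformE.
move=> h; apply: (le_trans h); rewrite le_eqVlt; apply/orP; left; apply/eqP.
apply: eq_bigr => i _; apply: eq_bigr => j _; rewrite !mxE.
have -> : - (lam i + lam j) * s = - lam i * s + - lam j * s by ring.
rewrite expRD; ring.
Qed.


Lemma FF_pos n (lam : 'I_n -> R) t i j : (forall i, 0 < lam i) -> 0 < t ->
  0 < FF lam t i j.
Proof.
move=> lp tp; rewrite /FF; apply: divr_gt0; last exact: addr_gt0.
rewrite subr_gt0 expR_lt1 mulNr oppr_lt0; apply: mulr_gt0 => //; exact: addr_gt0.
Qed.

Lemma FF_sym n (lam : 'I_n -> R) t i j : FF lam t i j = FF lam t j i.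
Proof. by rewrite /FF [lam i + _]addrC. Qed.

Lemma FF_CS n (lam : 'I_n -> R) t i j : (forall i, 0 < lam i) -> 0 < t ->
  FF lam t i j ^+ 2 <= FF lam t i i * FF lam t j j.
Proof.
move=> lp tp.
have key : forall al be : R, 0 <= al ^+ 2 * FF lam t i i
    + 2 * al * be * FF lam t i j + be ^+ 2 * FF lam t j j.
  move=> al be.
  pose lam2 : 'I_2 -> R := fun k => if val k == 0%N then lam i else lam j.
  pose y2 : 'I_2 -> R := fun k => if val k == 0%N then al else be.
  have lp2 : forall k, 0 < lam2 k by move=> k; rewrite /lam2; case: ifP.
  have cp2 : forall z : 'rV[R]_2, 0 <= qform (const_mx 1) z.
    move=> z; rewrite qformE !big_ord_recl !big_ord0 !mxE.
    have := sqr_ge0 (z 0 ord0 + z 0 (lift ord0 ord0)); rewrite !mulr1 !addr0; nra.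
  have := psd_weighted (c := const_mx 1) y2 lp2 cp2 (ltW tp).
  rewrite !big_ord_recl !big_ord0 !mxE /= /FF /lam2 /y2 /=.
  rewrite [lam j + lam i]addrC.
  by rewrite /FF; lra.
have := key (FF lam t i j) (- FF lam t i i).
have hi := FF_pos (lam := lam) i i lp tp.
have hj := FF_pos (lam := lam) j j lp tp.
move=> h.
have : 0 <= FF lam t i i * (FF lam t i i * FF lam t j j - FF lam t i j ^+ 2).
  move: h; set A := FF lam t i i; set B := FF lam t i j; set C := FF lam t j j.
  have -> : A * (A * C - B ^+ 2) = B ^+ 2 * A + 2 * B * - A * B + (- A) ^+ 2 * C by ring.
  done.
by rewrite pmulr_rge0 // subr_ge0; exact: id.
Qed.


Definition dd n (lam : 'I_n -> R) t i := Num.sqrt ((g_t lam t i)^-1).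

Lemma g_FF n (lam : 'I_n -> R) t i : g_t lam t i = FF lam t i i.
Proof. by rewrite /g_t /FF -mulr2n mulr_natl. Qed.

Lemma dd_sq n (lam : 'I_n -> R) t i : (forall i, 0 < lam i) -> 0 < t ->
  dd lam t i ^+ 2 = (FF lam t i i)^-1.
Proof.
move=> lp tp; rewrite /dd sqr_sqrtr g_FF //.
by rewrite invr_ge0 ltW // FF_pos.
Qed.

Lemma dd_ge0 n (lam : 'I_n -> R) t i : 0 <= dd lam t i.
Proof. exact: sqrtr_ge0. Qed.

Lemma tilde_entry n (lam : 'I_n -> R) (a : 'M[R]_n) t i j :
  tilde_mat lam a t i j = dd lam t i * dd lam t j * (a i j * FF lam t i j).
Proof.
rewrite /tilde_mat /Ghalf mul_diag_mx mul_mx_diag !mxE /dd /FF.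
ring.
Qed.

Lemma tilde_sym n (lam : 'I_n -> R) (a : 'M[R]_n) t : a^T = a ->
  (tilde_mat lam a t)^T = tilde_mat lam a t.
Proof.
move=> sa; apply/matrixP => i j; rewrite mxE !tilde_entry FF_sym.
have -> : a j i = a i j by rewrite -[a in LHS]sa mxE.
ring.
Qed.

Lemma qform1 n (z : 'rV[R]_n) : qform 1%:M z = sqnorm z.
Proof.
rewrite /qform mulmx1 mxE /sqnorm; apply: eq_bigr => i _; by rewrite mxE expr2.
Qed.


Lemma tilde_lb n (lam : 'I_n -> R) (a : 'M[R]_n) t (L0 : R) :
  (forall i, 0 < lam i) -> 0 < t ->
  (forall x, L0 * sqnorm x <= qform a x) ->
  forall x, L0 * sqnorm x <= qform (tilde_mat lam a t) x.
Proof.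
move=> lp tp lb x.
pose y i := x 0 i * dd lam t i.
have cp : forall z, 0 <= qform (a - L0%:M) z.
  by move=> z; rewrite qformD2 -scalemx1 qformZ qform1 subr_ge0.
have := psd_weighted (c := a - L0%:M) y lp cp (ltW tp).
have e1 : forall i, \sum_j (a - L0%:M) i j * y i * y j * FF lam t i j =
    \sum_j a i j * y i * y j * FF lam t i j - L0 * y i ^+ 2 * FF lam t i i.
  move=> i; rewrite (bigD1 i) //= [X in _ = X - _](bigD1 i) //=.
  rewrite !mxE eqxx mulr1n.
  have -> : \sum_(j | j != i) (a - L0%:M) i j * y i * y j * FF lam t i j =
            \sum_(j | j != i) a i j * y i * y j * FF lam t i j.
    apply: eq_bigr => j ji; rewrite !mxE eq_sym (negbTE ji) mulr0n subr0 //.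
  ring.
rewrite (eq_bigr _ (fun i _ => e1 i)) sumrB.
have e2 : \sum_i \sum_j a i j * y i * y j * FF lam t i j = qform (tilde_mat lam a t) x.
  rewrite qformE; apply: eq_bigr => i _; apply: eq_bigr => j _.
  rewrite tilde_entry /y; ring.
have e3 : \sum_i L0 * y i ^+ 2 * FF lam t i i = L0 * sqnorm x.
  rewrite /sqnorm mulr_sumr; apply: eq_bigr => i _.
  rewrite /y exprMn dd_sq // -mulrA -mulrA mulVf ?mulr1 //.
  by rewrite gt_eqF // FF_pos.
by rewrite e2 e3 subr_ge0.
Qed.

Lemma tilde_diff_entry n (lam : 'I_n -> R) (a b : 'M[R]_n) t i j :
  (forall i, 0 < lam i) -> 0 < t ->
  `|(tilde_mat lam a t - tilde_mat lam b t) i j| <= `|(a - b) i j|.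
Proof.
move=> lp tp.
have e : forall (M N : 'M[R]_n), (M - N) i j = M i j - N i j by move=> M N; rewrite !mxE.
rewrite !e !tilde_entry.
set v := dd lam t i * dd lam t j * FF lam t i j.
have -> : dd lam t i * dd lam t j * (a i j * FF lam t i j) -
          dd lam t i * dd lam t j * (b i j * FF lam t i j) = v * (a i j - b i j).
  by rewrite /v; ring.
rewrite normrM ler_piMl //.
have v0 : 0 <= v.
  by rewrite /v; apply: mulr_ge0; [apply: mulr_ge0; apply: dd_ge0 | apply: ltW; apply: FF_pos].
have hv : v ^+ 2 <= 1.
  have hi := FF_pos (lam := lam) i i lp tp.
  have hj := FF_pos (lam := lam) j j lp tp.
  have cs := FF_CS i j lp tp.
  have -> : v ^+ 2 = FF lam t i j ^+ 2 / (FF lam t i i * FF lam t j j).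
    by rewrite /v invfM -(dd_sq i lp tp) -(dd_sq j lp tp); ring.
  by rewrite ler_pdivrMr ?mul1r // mulr_gt0.
rewrite ger0_norm //.
nra.
Qed.

End S.

Unset Implicit Arguments.

Lemma final_bound (R : realType) (M th ph X : R) : 0 <= th -> 0 <= ph -> th < M -> ph < M ->
  expR (- ((th + ph) / 2)) <= X -> X <= expR ((th + ph) / 2) ->
  `|X - 1| <= expR M * (ph + th).
Proof.
move=> th0 ph0 thM phM lo hi.
set y := (th + ph) / 2.
have y0 : 0 <= y by rewrite /y divr_ge0 // addr_ge0.
have yM : y < M by rewrite /y; lra.
have hE : expR y * expR (- y) = 1 by rewrite expRxMexpNx_1.
have e1 : 1 <= expR y by rewrite -expR0 ler_expR.
have e2 : expR (- y) <= 1 by rewrite -expR0 ler_expR oppr_le0.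
have e3 := expR_ge1Dx (- y).
have e4 : expR y <= expR M by rewrite ler_expR ltW.
have h1 : `|X - 1| <= expR y - 1.
  rewrite ler_norml; apply/andP; split; last by lra.
  have : 1 - expR (- y) <= expR y - 1 by nra.
  lra.
have h2 : expR y - 1 <= y * expR y by nra.
have h3 : y * expR y <= y * expR M by apply: ler_wpM2l.
have h4 : y * expR M <= expR M * (ph + th).
  rewrite mulrC; apply: ler_wpM2l; first exact: expR_ge0.
  rewrite /y; lra.
lra.
Qed.

Lemma sqrt_expR (R : realType) (x : R) : Num.sqrt (expR x) = expR (x / 2).
Proof.
have -> : expR x = expR (x / 2) ^+ 2.
  by rewrite -expRM_natl; congr expR; field.
by rewrite sqrtr_sqr ger0_norm // expR_ge0.
Qed.

Lemma ratio_bounds (R : realType) n (A B : 'M[R]_n) w (th ph : R) :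
  0 < \det A -> 0 < \det B -> \det B <= expR th * \det A -> \det A <= expR th * \det B ->
  `|qform (invmx A) w - qform (invmx B) w| <= ph ->
  expR (- ((th + ph) / 2)) <= Qm w (invmx A) / Qm w (invmx B) <= expR ((th + ph) / 2).
Proof.
move=> dA0 dB0 hB hA hq.
rewrite /Qm !det_inv.
set K := (2 * pi) `^ _.
have K0 : 0 < K by apply: powR_gt0; rewrite mulr_gt0 // pi_gt0.
set dA := \det A; set dB := \det B.
set qA := qform (invmx A) w; set qB := qform (invmx B) w.
have sB0 : 0 < Num.sqrt dB by rewrite sqrtr_gt0.
have eX : K * Num.sqrt dA^-1 * expR (- (qA / 2)) / (K * Num.sqrt dB^-1 * expR (- (qB / 2)))
    = Num.sqrt (dB / dA) * expR ((qB - qA) / 2).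
  have sA0 : 0 < Num.sqrt dA by rewrite sqrtr_gt0.
  rewrite sqrtrM ?(ltW dB0) // !sqrtrV ?(ltW dA0) ?(ltW dB0) //.
  have -> : (qB - qA) / 2 = - (qA / 2) + - (- (qB / 2)) by field.
  rewrite expRD [expR (- - _)]expRN.
  field; rewrite !gt_eqF ?expR_gt0 //.
rewrite eX.
set r := dB / dA.
have r_hi : r <= expR th by rewrite /r ler_pdivrMr.
have r_lo : expR (- th) <= r.
  rewrite /r ler_pdivlMr // expRN ler_pdivrMl ?expR_gt0 //.
have s_hi : Num.sqrt r <= expR (th / 2) by rewrite -sqrt_expR ler_sqrt ?expR_ge0.
have s_lo : expR (- th / 2) <= Num.sqrt r.
  by rewrite -sqrt_expR ler_sqrt // ltW // divr_gt0.
have q1 : (qB - qA) / 2 <= ph / 2.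
  have := ler_norm (qB - qA); rewrite distrC; lra.
have q2 : - ph / 2 <= (qB - qA) / 2.
  have := ler_norm (qA - qB); lra.
have E_hi : expR ((qB - qA) / 2) <= expR (ph / 2) by rewrite ler_expR.
have E_lo : expR (- ph / 2) <= expR ((qB - qA) / 2) by rewrite ler_expR.
apply/andP; split.
  have -> : - ((th + ph) / 2) = - th / 2 + - ph / 2 by field.
  rewrite expRD; apply: ler_pM => //; exact: expR_ge0.
have -> : (th + ph) / 2 = th / 2 + ph / 2 by field.
rewrite expRD; apply: ler_pM => //; exact: sqrtr_ge0.
Qed.

Theorem proposition4p7 (R : realType) (M : R) (hM : 0 < M) :
  exists c1 : R, forall (m : nat) (lam : 'I_m -> R) (L0 L1 : R)
    (a b : 'M[R]_m) (w : 'rV[R]_m),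
    (0 < m)%N ->
    (forall i, 0 < lam i) ->
    (forall i j : 'I_m, (i <= j)%N -> lam i <= lam j) ->
    0 < L0 -> L0 <= L1 ->
    posdef a -> posdef b ->
    loewner_bounds L0 L1 a -> loewner_bounds L0 L1 b ->
    let theta := L0^-1 * m%:R * snorm (a - b) in
    let phi := L0^-2 * sqnorm w * snorm (a - b) in
    theta < M -> phi < M ->
    forall t : R, 0 < t ->
      `| Qm w (Tilde_inv lam a t) / Qm w (Tilde_inv lam b t) - 1 |
        <= c1 * (phi + theta).
Proof.
exists (expR M) => m lam L0 L1 a b w hm lp _ L0p _ [sa _] [sb _] la lb theta phi thM phM t tp.
set s := snorm (a - b).
have s0 : 0 <= s.
  apply: le_trans (row_le_snorm (a - b) (Ordinal hm)).
  by apply: sumr_ge0 => j _.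
have lba : forall x, L0 * sqnorm x <= qform a x by move=> x; case/andP: (la x).
have lbb : forall x, L0 * sqnorm x <= qform b x by move=> x; case/andP: (lb x).
set A := tilde_mat lam a t; set B := tilde_mat lam b t.
have lbA : forall x, L0 * sqnorm x <= qform A x := tilde_lb lp tp lba.
have lbB : forall x, L0 * sqnorm x <= qform B x := tilde_lb lp tp lbb.
have sA : A^T = A := tilde_sym lam t sa.
have sB : B^T = B := tilde_sym lam t sb.
have hD : forall x, `|qform (A - B) x| <= s * sqnorm x.
  by move=> x; apply: qform_abs_le => i j; exact: tilde_diff_entry.
have hD' : forall x, `|qform (B - A) x| <= s * sqnorm x.
  by move=> x; rewrite qformD2 distrC -qformD2.
have pdA : forall x, x != 0 -> 0 < qform A x.
  by move=> x x0; apply: lt_le_trans (lbA x); rewrite mulr_gt0 // sqnorm_gt0.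
have pdB : forall x, x != 0 -> 0 < qform B x.
  by move=> x x0; apply: lt_le_trans (lbB x); rewrite mulr_gt0 // sqnorm_gt0.
have [uA dA0] := pd_unit sA pdA.
have [uB dB0] := pd_unit sB pdB.
have [_ hB] := det_ratio L0p s0 sA sB lbA lbB hD.
have [_ hA] := det_ratio L0p s0 sB sA lbB lbA hD'.
have hq := inv_qform_diff w L0p s0 sA sB uA uB lbA lbB hD.
have eth : m%:R * (s / L0) = theta by rewrite /theta -/s; field; rewrite gt_eqF.
have eph : s * sqnorm w / L0 ^+ 2 = phi by rewrite /phi -/s; field; rewrite gt_eqF.
rewrite eth in hA hB; rewrite eph in hq.
have th0 : 0 <= theta by rewrite /theta mulr_ge0 // mulr_ge0 // ?invr_ge0 ?ltW.
have ph0 : 0 <= phi.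
  by rewrite /phi mulr_ge0 // mulr_ge0 // ?sqnorm_ge0 // invr_ge0 exprn_ge0 // ltW.
have := @ratio_bounds R m A B w theta phi dA0 dB0 hB hA hq.
case/andP => lo hi.
exact: (@final_bound R M theta phi _ th0 ph0 thM phM lo hi).
Qed.
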